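(* Let $P$ be a poset and $\mathcal{U}$ a join-specification for $P$ such that $\mathcal{I}_{\mathcal{U}}$ is a frame. Let $J$ be a finite non-empty index set and $S_j\subseteq P$ for each $j\in J$. Then $\Gamma_{\mathcal{U}}\big(\bigcap_{j\in J}S_j^\downarrow\big)=\bigcap_{j\in J}\Gamma_{\mathcal{U}}(S_j)$.
   Context: For $S\subseteq P$, $S^\downarrow=\{p\in P:p\le s\text{ for some }s\in S\}$. A join-specification for $P$ is a set $\mathcal{U}\subseteq\wp(P)$ such that $\bigvee S$ exists in $P$ for every $S\in\mathcal{U}$ and $\{p\}\in\mathcal{U}$ for every $p\in P$. A $\mathcal{U}$-ideal is a down-closed $C\subseteq P$ with $\bigvee S\in C$ whenever $S\in\mathcal{U}$, $S\subseteq C$; $\mathcal{I}_{\mathcal{U}}$ is the complete lattice of $\mathcal{U}$-ideals ordered by inclusion; $\Gamma_{\mathcal{U}}(S)$ is the smallest $\mathcal{U}$-ideal containing $S$. *)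

(* Defs.v *)
From HB Require Import structures.
From mathcomp Require Import all_boot all_order.
From mathcomp Require Import boolp classical_sets.
Set Implicit Arguments. Unset Strict Implicit. Unset Printing Implicit Defensive.
Import Order.TTheory.
Local Open Scope classical_set_scope.
Local Open Scope order_scope.

Definition downset {d} {P : porderType d} (S : set P) : set P :=
  [set p | exists2 s, S s & p <= s].

Definition is_join {d} {P : porderType d} (S : set P) (x : P) : Prop :=
  (forall s, S s -> s <= x) /\
  (forall y, (forall s, S s -> s <= y) -> x <= y).

Definition join_spec {d} {P : porderType d} (U : set (set P)) : Prop :=
  (forall S, U S -> exists x, is_join S x) /\ (forall p : P, U [set p]).

Definition U_ideal {d} {P : porderType d} (U : set (set P)) (C : set P) : Prop :=
  (forall p q : P, p <= q -> C q -> C p) /\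
  (forall S x, U S -> S `<=` C -> is_join S x -> C x).

Definition I_U {d} {P : porderType d} (U : set (set P)) : set (set P) :=
  [set C | U_ideal U C].

Definition Gamma {d} {P : porderType d} (U : set (set P)) (S : set P) : set P :=
  \bigcap_(C in [set C | U_ideal U C /\ S `<=` C]) C.

Definition is_lub_in {T} (L : set (set T)) (F : set (set T)) (x : set T) : Prop :=
  L x /\ (forall b, F b -> b `<=` x) /\
  (forall y, L y -> (forall b, F b -> b `<=` y) -> x `<=` y).

Definition is_glb_in {T} (L : set (set T)) (F : set (set T)) (x : set T) : Prop :=
  L x /\ (forall b, F b -> x `<=` b) /\
  (forall y, L y -> (forall b, F b -> y `<=` b) -> y `<=` x).

(* A complete lattice L (ordered by inclusion) is a frame: binary meets
   distribute over arbitrary joins,  a /\ \/F = \/ { a /\ b | b in F }. *)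
Definition is_frame {T} (L : set (set T)) : Prop :=
  (forall F, F `<=` L -> exists x, is_lub_in L F x) /\
  (forall F, F `<=` L -> exists x, is_glb_in L F x) /\
  (forall a F j m, L a -> F `<=` L ->
     is_lub_in L F j -> is_glb_in L [set a; j] m ->
     is_lub_in L [set c | exists2 b, F b & is_glb_in L [set a; b] c] m).

(* Main.v *)
Require Import Defs.
From mathcomp Require Import all_boot all_order.
From mathcomp Require Import boolp classical_sets.
Local Open Scope classical_set_scope.
Import Order.TTheory.

Section S.
Context (d : Order.disp_t) (P : porderType d) (U : set (set P)).

Definition pr (b : P) : set P := [set p | (p <= b)%O].

Lemma GammaE (A : set P) p :
  Gamma U A p <-> forall C, U_ideal U C -> A `<=` C -> C p.
Proof.
split; first by move=> H C h1 h2; apply: H; split.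
by move=> H C [h1 h2]; apply: H.
Qed.

Lemma Gamma_ideal A : U_ideal U (Gamma U A).
Proof.
split.
- move=> p q pq /GammaE Hq; apply/GammaE => C hC hA.
  by apply: (hC.1 p q pq); apply: Hq.
- move=> T x hT hTC hj; apply/GammaE => C hC hA.
  apply: (hC.2 T x hT) => // t /hTC /GammaE; apply => //.
Qed.

Lemma Gamma_sub A : A `<=` Gamma U A.
Proof. by move=> p Ap; apply/GammaE => C _; apply. Qed.

Lemma Gamma_min A C : U_ideal U C -> A `<=` C -> Gamma U A `<=` C.
Proof. by move=> hC hA p /GammaE; apply. Qed.

Lemma Gamma_mono A B : A `<=` B -> Gamma U A `<=` Gamma U B.
Proof.
move=> AB; apply: Gamma_min; first exact: Gamma_ideal.
by move=> p /AB; apply: Gamma_sub.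
Qed.

Lemma pr_ideal b : U_ideal U (pr b).
Proof.
split.
- by move=> p q pq; rewrite /pr /= => qb; apply: le_trans pq qb.
- by move=> T x _ hT [_ hx]; apply: hx.
Qed.

Lemma ideal_I C D : U_ideal U C -> U_ideal U D -> U_ideal U (C `&` D).
Proof.
move=> hC hD; split.
- by move=> p q pq [Cq Dq]; split; [apply: hC.1 pq Cq | apply: hD.1 pq Dq].
- move=> T x hT hTCD hj; split.
  + by apply: (hC.2 T x hT) => // t /hTCD [].
  + by apply: (hD.2 T x hT) => // t /hTCD [].
Qed.

Lemma glb_I C D : U_ideal U C -> U_ideal U D ->
  is_glb_in (I_U U) [set C; D] (C `&` D).
Proof.
move=> hC hD; split; first exact: ideal_I.
split.
- by move=> b [->|->] p [].
- move=> y _ hy p yp; split; [apply: (hy C) | apply: (hy D)] => //; by [left|right].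
Qed.

Lemma lub_Gamma B :
  is_lub_in (I_U U) [set f | exists2 b, B b & f = pr b] (Gamma U B).
Proof.
split; first exact: Gamma_ideal.
split.
- move=> f [b Bb ->] p pb; have := Gamma_ideal B.
  by move=> [h _]; apply: (h p b pb); apply: Gamma_sub.
- move=> y hy hF; apply: Gamma_min => // b Bb.
  by apply: (hF (pr b)); [exists b | rewrite /pr /=].
Qed.

Hypothesis hframe : is_frame (I_U U).

Lemma L1 D B Y : U_ideal U D -> U_ideal U Y ->
  (forall b, B b -> D `&` pr b `<=` Y) -> D `&` Gamma U B `<=` Y.
Proof.
move=> hD hY H.
have hF : [set f | exists2 b, B b & f = pr b] `<=` I_U U.
  by move=> f [b _ ->]; apply: pr_ideal.
have [_ [_ hfr]] := hframe.
have := hfr D [set f | exists2 b, B b & f = pr b] (Gamma U B) (D `&` Gamma U B) hD hF (lub_Gamma B)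
  (@glb_I D (Gamma U B) hD (Gamma_ideal B)).
move=> [_ [_ hl]]; apply: hl => // c [f [b Bb ->] [_ [hc _]]].
move=> p cp; apply: (H b Bb); split.
- by apply: (hc D) => //; left.
- by apply: (hc (pr b)) => //; right.
Qed.

Lemma key A B : (forall p q, (p <= q)%O -> A q -> A p) ->
  (forall p q, (p <= q)%O -> B q -> B p) ->
  Gamma U A `&` Gamma U B `<=` Gamma U (A `&` B).
Proof.
move=> dA dB.
apply: L1; [exact: Gamma_ideal | exact: Gamma_ideal |].
move=> b Bb p [pA pb].
have : (pr b `&` Gamma U A) p by [].
apply: L1; [exact: pr_ideal | exact: Gamma_ideal |].
move=> a Aa q [qb qa]; apply: Gamma_sub; split.
- by apply: dA qa Aa.
- by apply: dB qb Bb.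
Qed.

End S.

Theorem corollary2p18 (d : Order.disp_t) (P : porderType d)
  (U : set (set P)) (hU : join_spec U) (hframe : is_frame (I_U U))
  (J : finType) (hJ : (0 < #|J|)%N) (S : J -> set P) :
  Gamma U (\bigcap_(j in [set: J]) downset (S j)) =
  \bigcap_(j in [set: J]) Gamma U (S j).
Proof.
have dd : forall T : set P, forall p q, (p <= q)%O -> downset T q -> downset T p.
  by move=> T p q pq [s Ts qs]; exists s => //; apply: le_trans pq qs.
have Hs : forall s : seq J, (fun p => forall j, j \in s -> Gamma U (S j) p) `<=`
    Gamma U (fun p => forall j, j \in s -> downset (S j) p).
  elim=> [|j s IH] p Hp.
    by apply: Gamma_sub => j.
  have H1 : Gamma U (S j) p by apply: Hp; rewrite inE eqxx.
  have H2 := IH p (fun j' hj' => Hp j' ltac:(by rewrite inE hj' orbT)).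
  have H3 : Gamma U (downset (S j)) p.
    apply: (@Gamma_mono d P U (S j)) => // q Sq; exists q => //.
  have dX : forall p q, (p <= q)%O -> (fun p => forall j, j \in s -> downset (S j) p) q ->
      (fun p => forall j, j \in s -> downset (S j) p) p.
    by move=> p0 q0 pq Hq j' hj'; apply: dd pq (Hq j' hj').
  have := @key d P U hframe _ _ (dd (S j)) dX p (conj H3 H2).
  apply: Gamma_mono => q [q1 q2] j'.
  by rewrite inE => /orP [/eqP -> //| hj']; apply: q2.
apply/seteqP; split.
- move=> p Gp j _.
  move: p Gp; apply: Gamma_min; first exact: Gamma_ideal.
  move=> p Hp; have [s Ss ps] := Hp j I.
  have [h _] := @Gamma_ideal d P U (S j).
  by apply: h ps _; apply: Gamma_sub.
- move=> p Hp.
  have := Hs (enum J) p (fun j _ => Hp j I).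
  apply: Gamma_mono => q Hq j _; apply: Hq; by rewrite mem_enum.
Qed.
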